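(* Let $\Sigma=(X,\mathcal{S},\phi)$ be a forward complete dynamical system. Let $t_1>0$, $G_0>0$, and let $\beta$ be a function of class $\mathcal{K}_\infty$ such that $\limsup_{r\downarrow 0}\frac{\beta(r)}{r}<+\infty$ and $$\|\phi(t,x,\sigma)\|\le G_0\,\beta(\|x\|)\quad \text{for all } t\in[0,t_1],\ x\in X,\ \sigma\in\mathcal{S}.$$ Then the following statements are equivalent: (i) $\Sigma$ is USGES; (ii) for every $p>0$ there exists a nondecreasing function $k:\mathbb{R}_+\to\mathbb{R}_+$ such that $$\int_0^{+\infty}\|\phi(t,x,\sigma)\|^p\,dt\le k(\|x\|)^p\|x\|^p\quad\text{for all } x\in X,\ \sigma\in\mathcal{S};$$ (iii) there exist $p>0$ and a nondecreasing function $k:\mathbb{R}_+\to\mathbb{R}_+$ such that the inequality in (ii) holds for all $x\in X$ and $\sigma\in\mathcal{S}$.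
   Context: $(X,\|\cdot\|)$ is a Banach space and $B_X(x,r)$ denotes the closed ball of center $x$ and radius $r$. A function $\alpha:\mathbb{R}_+\to\mathbb{R}_+$ is of class $\mathcal{K}$ if it is continuous, increasing and $\alpha(0)=0$; of class $\mathcal{K}_\infty$ if moreover unbounded. Let $\mathcal{Q}$ be a nonempty set and $\mathcal{S}$ a set of functions $\sigma:\mathbb{R}_+\to\mathcal{Q}$ which is closed by time-shift (for $\sigma\in\mathcal{S}$, $\tau\ge0$, the function $\mathbb{T}_\tau\sigma:s\mapsto\sigma(\tau+s)$ is in $\mathcal{S}$) and closed by concatenation (for $\sigma_1,\sigma_2\in\mathcal{S}$, $\tau>0$, the function equal to $\sigma_1$ on $[0,\tau]$ and with $\sigma(\tau+t)=\sigma_2(t)$ for $t>0$ is in $\mathcal{S}$). A triple $\Sigma=(X,\mathcal{S},\phi)$ with $\phi:\mathbb{R}_+\times X\times\mathcal{S}\to X$ is a forward complete dynamical system if: (i) $\phi(0,x,\sigma)=x$; (ii) if $\tilde\sigma=\sigma$ on $[0,t]$ then $\phi(t,x,\tilde\sigma)=\phi(t,x,\sigma)$; (iii) $t\mapsto\phi(t,x,\sigma)$ is continuous; (iv) $\phi(\tau,\phi(t,x,\sigma),\mathbb{T}_t\sigma)=\phi(t+\tau,x,\sigma)$ for all $t,\tau\ge0$, $x\in X$, $\sigma\in\mathcal{S}$. $\Sigma$ is uniformly semi-globally exponentially stable at the origin (USGES) if for every $r>0$ there exist $M(r)>0$, $\lambda(r)>0$ such that $\|\phi(t,x,\sigma)\|\le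 M(r)e^{-\lambda(r)t}\|x\|$ for all $t\ge0$, $x\in B_X(0,r)$, $\sigma\in\mathcal{S}$. *)

(* Defs.v *)
From HB Require Import structures.
From mathcomp Require Import all_boot all_order all_algebra.
From mathcomp Require Import all_classical all_reals all_analysis.
Set Implicit Arguments. Unset Strict Implicit. Unset Printing Implicit Defensive.
Import Order.TTheory GRing.Theory Num.Def Num.Theory.
Import numFieldNormedType.Exports.
Local Open Scope classical_set_scope.
Local Open Scope ring_scope.

(* Time-indexed signals sigma : R_+ -> Q are represented as functions R -> Q;
   only their values on [0, +oo) are relevant. *)

Section Defs.
Variables (R : realType) (X : normedModType R) (Q : Type).

Definition tshift (tau : R) (s : R -> Q) : R -> Q := fun t => s (tau + t).

Definition concat (s1 s2 : R -> Q) (tau : R) : R -> Q :=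
  fun t => if t <= tau then s1 t else s2 (t - tau).

Definition closed_by_shift (S : set (R -> Q)) : Prop :=
  forall s tau, S s -> 0 <= tau -> S (tshift tau s).

Definition closed_by_concat (S : set (R -> Q)) : Prop :=
  forall s1 s2 tau, S s1 -> S s2 -> 0 < tau -> S (concat s1 s2 tau).

Definition forward_complete_dynsys (S : set (R -> Q))
    (phi : R -> X -> (R -> Q) -> X) : Prop :=
  [/\ closed_by_shift S /\ closed_by_concat S,
      (forall x s, S s -> phi 0 x s = x),
      (forall t x s s', S s -> S s' -> 0 <= t ->
                   (forall u, 0 <= u <= t -> s' u = s u) ->
                   phi t x s' = phi t x s),
      (forall x s, S s ->
                    {within `[0, +oo[, continuous (fun t => phi t x s)})
    & (forall t tau x s, S s -> 0 <= t -> 0 <= tau ->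
                   phi tau (phi t x s) (tshift t s) = phi (t + tau) x s)].

Definition USGES (S : set (R -> Q)) (phi : R -> X -> (R -> Q) -> X) : Prop :=
  forall r : R, 0 < r -> exists M lam : R, 0 < M /\ 0 < lam /\
    forall t x s, 0 <= t -> `|x| <= r -> S s ->
      `|phi t x s| <= M * expR (- lam * t) * `|x|.

(* class K_infinity, for functions R_+ -> R_+ (represented on [0,+oo)) *)
Definition class_Kinf (beta : R -> R) : Prop :=
  [/\ forall r, 0 <= r -> 0 <= beta r,
      {within `[0, +oo[, continuous beta},
      (forall a b, 0 <= a -> a < b -> beta a < beta b),
      beta 0 = 0
    & forall M, exists r, 0 <= r /\ M < beta r].

Definition nondecr_nonneg (k : R -> R) : Prop :=
  (forall r, 0 <= r -> 0 <= k r) /\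
  (forall a b, 0 <= a -> a <= b -> k a <= k b).

Definition Lp_bound (S : set (R -> Q)) (phi : R -> X -> (R -> Q) -> X)
    (p : R) (k : R -> R) : Prop :=
  forall x s, S s ->
    (\int[lebesgue_measure]_(t in `[0%R, +oo[)
        ((`|phi t x s| `^ p)%:E) <= ((k `|x|) `^ p * `|x| `^ p)%:E)%E.

End Defs.

(* Main.v *)
Require Import Defs.
From HB Require Import structures.
From mathcomp Require Import all_boot all_order all_algebra.
From mathcomp Require Import all_classical all_reals all_analysis.
From mathcomp Require Import measurable_realfun.
From mathcomp Require Import ring lra.
Import Order.TTheory GRing.Theory Num.Def Num.Theory.
Import numFieldNormedType.Exports.
Local Open Scope classical_set_scope.
Local Open Scope ring_scope.

Lemma meas_f (R : realType) (X : completeNormedModType R) (Q : Type)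
    (S : set (R -> Q)) (phi : R -> X -> (R -> Q) -> X) (p : R) (x : X) (s : R -> Q) :
  forward_complete_dynsys S phi -> S s ->
  measurable_fun (`[0%R, +oo[ : set R) (fun t : R => ((`|phi t x s| `^ p)%:E : \bar R)%E).
Proof.
move=> [_ _ _ hc _] Ss.
apply/measurable_EFinP.
apply: (measurableT_comp (measurable_powR _)) => //.
apply: subspace_continuous_measurable_fun => //.
have := hc x s Ss.
move=> c t.
apply: continuous_comp; first exact: c.
exact: norm_continuous.
Qed.

Lemma L1 (R : realType) (X : completeNormedModType R) (Q : Type)
    (S : set (R -> Q)) (phi : R -> X -> (R -> Q) -> X) (p : R) (k : R -> R)
    (x : X) (s : R -> Q) (a b c : R) :
  forward_complete_dynsys S phi -> Lp_bound S phi p k -> S s ->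
  0 <= a -> 0 <= b -> 0 <= c ->
  (forall u, a <= u <= a + b -> c <= `|phi u x s| `^ p) ->
  c * b <= (k `|x|) `^ p * `|x| `^ p.
Proof.
move=> hS hL Ss a0 b0 c0 hc.
rewrite -lee_fin; apply: le_trans (hL x s Ss).
have mf := @meas_f R X Q S phi p x s hS Ss.
have sub : `[a, a + b] `<=` (`[0%R, +oo[ : set R).
  move=> u /=; rewrite !in_itv /= => /andP[au _]; rewrite andbT.
  exact: le_trans au.
have h1 : (\int[lebesgue_measure]_(t in `[a, (a + b)%R]) ((`|phi t x s| `^ p)%:E)
   <= \int[lebesgue_measure]_(t in `[0%R, +oo[) ((`|phi t x s| `^ p)%:E))%E.
  apply: ge0_subset_integral => //.
apply: (le_trans _ h1).
have L : (lebesgue_measure (`[a, (a+b)%R] : set R) = b%:E)%E.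
  rewrite lebesgue_measure_itv /= lte_fin.
  have [ab|] := ltP a (a + b).
    by rewrite -EFinD addrAC subrr add0r.
  move=> hb; have -> : b = 0 by apply/eqP; rewrite eq_le b0 andbT; move: hb; rewrite -{2}(addr0 a) lerD2l.
  done.
have h2 : (\int[lebesgue_measure]_(t in (`[a, (a + b)%R] : set R)) (cst c%:E t) = (c * b)%:E)%E.
  rewrite integral_cst // EFinM; congr (_ * _)%E; exact: L.
rewrite -h2.
apply: ge0_le_integral => //.
- exact: (measurable_funS _ sub mf).
Qed.

Lemma zero_traj {R : realType} {X : completeNormedModType R} {Q : Type}
    {S : set (R -> Q)} {phi : R -> X -> (R -> Q) -> X} (t1 G0 : R) (beta : R -> R) :
  forward_complete_dynsys S phi -> 0 < t1 -> beta 0 = 0 ->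
  (forall t x s, 0 <= t <= t1 -> S s -> `|phi t x s| <= G0 * beta `|x|) ->
  forall t s, 0 <= t -> S s -> phi t 0 s = 0.
Proof.
move=> [[hsh _] h0 _ _ hco] t10 b0 hB.
suff H : forall n : nat, forall t s, S s -> 0 <= t <= n%:R * t1 -> phi t 0 s = 0.
  move=> t s t0 Ss; apply: (H (truncn (t / t1)).+1 t s Ss).
  rewrite t0 /= -ler_pdivrMr //; exact: ltW (truncnS_gt _).
elim=> [|n IH] t s Ss.
  rewrite mul0r => /andP[t0 t0']; have -> : t = 0 by apply/eqP; rewrite eq_le t0 t0'.
  exact: h0.
move=> /andP[t0 tn].
have [tt1|tt1] := leP t t1.
  apply/eqP; rewrite -normr_le0.
  have := hB t 0 s; rewrite t0 tt1 normr0 b0 mulr0; apply => //.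
have -> : t = t1 + (t - t1) by rewrite addrC subrK.
have t10' := ltW t10.
have tt1' : 0 <= t - t1 by rewrite subr_ge0 ltW.
rewrite -(hco t1 (t - t1) 0 s Ss t10' tt1').
have -> : phi t1 0 s = 0.
  apply/eqP; rewrite -normr_le0.
  have := hB t1 0 s; rewrite lexx (ltW t10) normr0 b0 mulr0; apply => //.
apply: IH; first exact: hsh.
rewrite subr_ge0 (ltW tt1) /= lerBlDl.
by move: tn; rewrite -natr1 mulrDl mul1r addrC.
Qed.

Lemma beta_lin {R : realType} (beta : R -> R) :
  class_Kinf beta ->
  (limf_esup (fun r : R => (beta r / r)%:E) (0%R^'+) < +oo)%E ->
  forall Y, 0 <= Y -> exists L, 0 < L /\ forall y, 0 <= y <= Y -> beta y <= L * y.
Proof.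
move=> [bge0 _ binc b0 _] hl Y Y0.
have bmon : forall a b, 0 <= a -> a <= b -> beta a <= beta b.
  move=> a b a0; rewrite le_eqVlt => /predU1P[-> //|ab]; exact/ltW/binc.
move: hl; rewrite /limf_esup => /ereal_inf_lt[_ [V hV <-]] hsup.
move: hV => /nbhs_ballP[e /= e0 he].
have [M hM] : exists M : R, (ereal_sup [set (beta r / r)%:E | r in V] <= M%:E)%E.
  move: hsup; case: (ereal_sup _) => [r _|//|_]; first by exists r.
  by exists 0; rewrite leNye.
have hsmall : forall y, 0 < y < e -> beta y <= M * y.
  move=> y /andP[y0 ye].
  have Vy : V y by apply: he => //; rewrite /ball /= sub0r normrN ger0_norm ?ltW.
  have : ((beta y / y)%:E <= M%:E)%E.
    by apply: (le_trans _ hM); apply: ereal_sup_ubound; exists y.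
  by rewrite lee_fin ler_pdivrMr.
exists (Num.max M (beta Y / e) + 1); split.
  apply: ltr_wpDl; last exact: ltr01.
  by rewrite le_max; apply/orP; right; apply: divr_ge0; [exact: bge0|exact: ltW].
move=> y /andP[y0 yY].
have Lge : forall z, 0 <= z -> Num.max M (beta Y / e) * z <= (Num.max M (beta Y / e) + 1) * z.
  by move=> z z0; rewrite ler_wpM2r // lerDl.
have [->|yp] := eqVneq y 0; first by rewrite b0 mulr0.
have y0' : 0 < y by rewrite lt_neqAle eq_sym yp y0.
apply: le_trans (Lge y y0).
have [ye|ey] := ltP y e.
  apply: le_trans (hsmall y _) _; first by rewrite y0' ye.
  by rewrite ler_wpM2r // le_max lexx.
apply: (le_trans (bmon y Y y0 yY)).
apply: (@le_trans _ _ (beta Y / e * y)).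
  by rewrite mulrAC ler_pdivlMr // ler_wpM2l // bge0.
by rewrite ler_wpM2r // le_max lexx orbT.
Qed.

Lemma UB {R : realType} {X : completeNormedModType R} {Q : Type}
    {S : set (R -> Q)} {phi : R -> X -> (R -> Q) -> X} (t1 G0 : R) (beta : R -> R)
    (p : R) (k : R -> R) :
  forward_complete_dynsys S phi -> 0 < t1 -> 0 < G0 -> class_Kinf beta ->
  (limf_esup (fun r : R => (beta r / r)%:E) (0%R^'+) < +oo)%E ->
  (forall t x s, 0 <= t <= t1 -> S s -> `|phi t x s| <= G0 * beta `|x|) ->
  0 < p -> nondecr_nonneg k -> Lp_bound S phi p k ->
  forall r, 0 < r -> exists C, 0 < C /\
    forall t x s, 0 <= t -> `|x| <= r -> S s -> `|phi t x s| <= C * `|x|.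
Proof.
move=> hS t10 G00 hK hl hB p0 [k0 kmon] hL r r0.
have hS' := hS; case: hS' => [[hsh _] h0 _ _ hco].
have hK' := hK; case: hK' => [bge0 _ binc b0 _].
have bmon : forall a b, 0 <= a -> a <= b -> beta a <= beta b.
  move=> a b a0; rewrite le_eqVlt => /predU1P[-> //|ab]; exact/ltW/binc.
pose c a := (2 * ((k a) `^ p + 1) / t1) `^ (p^-1).
have c0 : forall a, 0 <= c a by move=> a; exact: powR_ge0.
have kp0 : forall a, 0 <= a -> 0 <= (k a) `^ p by move=> a _; exact: powR_ge0.
have A0 : forall a, 0 <= 2 * ((k a) `^ p + 1) / t1.
  move=> a; apply: divr_ge0; last exact: ltW.
  by apply: mulr_ge0 => //; apply: addr_ge0 => //; exact: powR_ge0.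
have cmon : forall a b, 0 <= a -> a <= b -> c a <= c b.
  move=> a b a0 ab; apply: ge0_ler_powR; [by rewrite invr_ge0 ltW|by rewrite nnegrE|by rewrite nnegrE|].
  rewrite ler_pM2r ?invr_gt0 // ler_pM2l // lerD2r.
  apply: ge0_ler_powR; [exact: ltW|rewrite nnegrE; exact: k0|rewrite nnegrE; exact: k0 (le_trans a0 ab)|exact: kmon].
have cp : forall a, (c a) `^ p = 2 * ((k a) `^ p + 1) / t1.
  by move=> a; rewrite /c -powRrM mulVf ?gt_eqF // powRr1.
have [La [La0 hL1]] := beta_lin beta hK hl _ (mulr_ge0 (c0 r) (ltW r0)).
have [Lb [Lb0 hL2]] := beta_lin beta hK hl _ (ltW r0).
exists (G0 * (La * c r + Lb)); split.
  by apply: mulr_gt0 => //; apply: ltr_wpDl => //; apply: mulr_ge0 => //; exact: ltW.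
move=> t x s t0 xr Ss.
have [->|xn0] := eqVneq x 0.
  by rewrite (zero_traj t1 G0 beta hS t10 b0 hB t s t0 Ss) !normr0 mulr0.
have nx0 : 0 < `|x| by rewrite normr_gt0.
have cxr : c `|x| * `|x| <= c r * r.
  apply: ler_pM => //; exact: cmon.
have [tt1|tt1] := leP t t1.
  apply: (le_trans (hB t x s _ Ss)); first by rewrite t0 tt1.
  rewrite -mulrA ler_pM2l //.
  apply: (le_trans (hL2 `|x| _)); first by rewrite normr_ge0 xr.
  rewrite ler_pM2r // lerDr; apply: mulr_ge0 => //; exact: ltW.
set y := c `|x| * `|x|.
have y0 : 0 <= y by apply: mulr_ge0.
have claim : `|phi t x s| <= G0 * beta y.
  rewrite leNgt; apply/negP => hlt.
  have key : forall u, t - t1 <= u <= t - t1 + t1 -> y `^ p <= `|phi u x s| `^ p.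
    move=> u /andP[u1 u2].
    have u0 : 0 <= u by apply: le_trans u1; rewrite subr_ge0 ltW.
    have tau0 : 0 <= t - u by rewrite subr_ge0; move: u2; rewrite subrK.
    have e : phi (t - u) (phi u x s) (tshift u s) = phi t x s.
      by rewrite hco // addrC subrK.
    have hb := hB (t - u) (phi u x s) (tshift u s).
    rewrite e in hb.
    have hb' : `|phi t x s| <= G0 * beta `|phi u x s|.
      apply: hb; last exact: hsh.
      by rewrite tau0 /= lerBlDr -lerBlDl.
    have hbb : beta y < beta `|phi u x s|.
      by rewrite -(ltr_pM2l G00); apply: lt_le_trans hlt hb'.
    have yu : y <= `|phi u x s|.
      rewrite leNgt; apply/negP => uy.
      by move: hbb; rewrite ltNge (bmon _ _ (normr_ge0 _) (ltW uy)).
    apply: ge0_ler_powR; [exact: ltW|by rewrite nnegrE|by rewrite nnegrE normr_ge0|exact: yu].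
  have := @L1 R X Q S phi p k x s (t - t1) t1 (y `^ p) hS hL Ss _ (ltW t10) (powR_ge0 y p) key.
  rewrite subr_ge0 (ltW tt1) => /(_ isT).
  rewrite /y powRM // cp.
  have xp0 : 0 < `|x| `^ p by apply: powR_gt0.
  have kp := kp0 `|x| (normr_ge0 _).
  rewrite mulrAC divfK ?gt_eqF // (ler_pM2r xp0) => h.
  lra.
apply: (le_trans claim).
rewrite -mulrA ler_pM2l //.
apply: (le_trans (hL1 y _)); first by rewrite y0 cxr.
apply: (@le_trans _ _ (La * c r * `|x|)).
  rewrite /y mulrA (ler_pM2r nx0) (ler_pM2l La0). exact: cmon.
rewrite (ler_pM2r nx0) lerDl. exact: ltW.
Qed.

Lemma half {R : realType} {X : completeNormedModType R} {Q : Type}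
    {S : set (R -> Q)} {phi : R -> X -> (R -> Q) -> X} (t1 G0 : R) (beta : R -> R)
    (p : R) (k : R -> R) :
  forward_complete_dynsys S phi -> 0 < t1 -> 0 < G0 -> class_Kinf beta ->
  (limf_esup (fun r : R => (beta r / r)%:E) (0%R^'+) < +oo)%E ->
  (forall t x s, 0 <= t <= t1 -> S s -> `|phi t x s| <= G0 * beta `|x|) ->
  0 < p -> nondecr_nonneg k -> Lp_bound S phi p k ->
  forall r, 0 < r -> exists T, 0 < T /\
    forall x s, `|x| <= r -> S s -> `|phi T x s| <= `|x| / 2.
Proof.
move=> hS t10 G00 hK hl hB p0 hk hL r r0.
have hS' := hS; case: hS' => [[hsh _] h0 _ _ hco].
have hK' := hK; case: hK' => [bge0 _ binc b0 _].
have hk' := hk; case: hk' => [k0 kmon].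
have [C [C0 hC]] := UB t1 G0 beta p k hS t10 G00 hK hl hB p0 hk hL r r0.
have [C2 [C20 hC2]] := UB t1 G0 beta p k hS t10 G00 hK hl hB p0 hk hL _ (mulr_gt0 C0 r0).
pose T := (2 * C2 * (k r + 1)) `^ p + 1.
have T0 : 0 < T by rewrite /T ltr_pwDr ?ltr01 ?powR_ge0.
exists T; split => // x s xr Ss.
have [->|xn0] := eqVneq x 0.
  by rewrite (zero_traj t1 G0 beta hS t10 b0 hB T s (ltW T0) Ss) !normr0 mul0r.
have nx0 : 0 < `|x| by rewrite normr_gt0.
rewrite leNgt; apply/negP => hlt.
pose a := `|x| / 2 / C2.
have a0 : 0 < a by rewrite /a !divr_gt0.
have key : forall u, 0 <= u <= 0 + T -> a `^ p <= `|phi u x s| `^ p.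
  move=> u /andP[u0 uT]; rewrite add0r in uT.
  have tau0 : 0 <= T - u by rewrite subr_ge0.
  have e : phi (T - u) (phi u x s) (tshift u s) = phi T x s.
    by rewrite hco // addrC subrK.
  have hu : `|phi u x s| <= C * r.
    apply: (le_trans (hC u x s u0 xr Ss)); rewrite ler_pM2l //.
  have hb := hC2 (T - u) (phi u x s) (tshift u s) tau0 hu (hsh _ _ Ss u0).
  rewrite e in hb.
  have au : a <= `|phi u x s|.
    rewrite /a ler_pdivrMr //; apply: ltW; apply: (lt_le_trans hlt).
    by rewrite mulrC.
  apply: ge0_ler_powR; [exact: ltW|by rewrite nnegrE ltW|by rewrite nnegrE normr_ge0|exact: au].
have := @L1 R X Q S phi p k x s 0 T (a `^ p) hS hL Ss (lexx 0) (ltW T0) (powR_ge0 a p) key.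
have ex : `|x| = a * (2 * C2).
  by rewrite /a; field; rewrite gt_eqF.
have c2 : 0 <= 2 * C2 by apply: mulr_ge0 => //; exact: ltW.
rewrite [X in _ <= _ * X `^ _]ex (powRM _ (ltW a0) c2).
rewrite mulrCA -(powRM _ (k0 _ (normr_ge0 _)) c2).
rewrite (ler_pM2l (powR_gt0 _ a0)) => hT.
have : (k `|x| * (2 * C2)) `^ p <= (2 * C2 * (k r + 1)) `^ p.
  apply: ge0_ler_powR; [exact: ltW| | |].
  - by rewrite nnegrE; apply: mulr_ge0 => //; apply: k0.
  - rewrite nnegrE; apply: mulr_ge0 => //; apply: addr_ge0 => //; apply: k0; exact: ltW.
  rewrite mulrC (ler_pM2l (mulr_gt0 _ C20)) //.
  apply: le_trans (kmon _ _ (normr_ge0 _) xr) _; rewrite lerDl; exact: ler01.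
rewrite /T in hT; lra.
Qed.

Lemma to_usges {R : realType} {X : completeNormedModType R} {Q : Type}
    {S : set (R -> Q)} {phi : R -> X -> (R -> Q) -> X} (t1 G0 : R) (beta : R -> R)
    (p : R) (k : R -> R) :
  forward_complete_dynsys S phi -> 0 < t1 -> 0 < G0 -> class_Kinf beta ->
  (limf_esup (fun r : R => (beta r / r)%:E) (0%R^'+) < +oo)%E ->
  (forall t x s, 0 <= t <= t1 -> S s -> `|phi t x s| <= G0 * beta `|x|) ->
  0 < p -> nondecr_nonneg k -> Lp_bound S phi p k -> USGES S phi.
Proof.
move=> hS t10 G00 hK hl hB p0 hk hL r r0.
have hS' := hS; case: hS' => [[hsh _] h0 _ _ hco].
have [C [C0 hC]] := UB t1 G0 beta p k hS t10 G00 hK hl hB p0 hk hL r r0.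
have [T [T0 hT]] := half t1 G0 beta p k hS t10 G00 hK hl hB p0 hk hL r r0.
have ln20 : 0 < ln (2 : R) by apply: ln_gt0; lra.
pose lam := ln (2 : R) / T.
have lam0 : 0 < lam by apply: divr_gt0.
have e2 : expR (ln (2 : R)) = 2 by rewrite lnK // posrE; lra.
have lamT : lam * T = ln 2 by rewrite /lam divfK ?gt_eqF.
exists (2 * C), lam; split; first by rewrite mulr_gt0.
split => //.
have small : forall t x s, 0 <= t <= T -> `|x| <= r -> S s ->
    `|phi t x s| <= 2 * C * expR (- lam * t) * `|x|.
  move=> t x s /andP[t0 tT] xr Ss.
  apply: (le_trans (hC t x s t0 xr Ss)); apply: ler_wpM2r => //.
  have : expR (- ln (2 : R)) <= expR (- lam * t).
    rewrite ler_expR mulNr lerN2 -lamT ler_pM2l //.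
  rewrite expRN e2 => h.
  rewrite [leLHS](_ : C = 2 * C * 2^-1); last by field.
  apply: ler_wpM2l => //; apply: mulr_ge0 => //; exact: ltW.
suff H : forall n : nat, forall t x s, 0 <= t <= n%:R * T -> `|x| <= r -> S s ->
    `|phi t x s| <= 2 * C * expR (- lam * t) * `|x|.
  move=> t x s t0 xr Ss; apply: (H (truncn (t / T)).+1) => //.
  rewrite t0 /= -ler_pdivrMr //; exact: ltW (truncnS_gt _).
elim=> [|n IH] t x s.
  rewrite mul0r => /andP[t0 t0'] xr Ss; apply: small => //.
  by rewrite t0 (le_trans t0' (ltW T0)).
move=> /andP[t0 tn] xr Ss.
have [tT|tT] := leP t T; first by apply: small => //; rewrite t0 tT.
have T0' := ltW T0.
have tT0 : 0 <= t - T by rewrite subr_ge0 ltW.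
have -> : t = T + (t - T) by rewrite addrC subrK.
rewrite -(hco T (t - T) x s Ss T0' tT0).
have hy := hT x s xr Ss.
have yr : `|phi T x s| <= r.
  apply: le_trans hy _; have := normr_ge0 x; lra.
have tn' : 0 <= t - T <= n%:R * T.
  by rewrite tT0 /= lerBlDl; move: tn; rewrite -natr1 mulrDl mul1r addrC.
apply: (le_trans (IH _ _ _ tn' yr (hsh _ _ Ss T0'))).
have eT : expR (- lam * (t - T)) = expR (- lam * (T + (t - T))) * 2.
  by rewrite -e2 -expRD -lamT; congr expR; ring.
rewrite eT -!mulrA (ler_pM2l (ltr0Sn _ 1)) (ler_pM2l C0) (ler_pM2l (expR_gt0 _)).
lra.
Qed.

Lemma from_usges {R : realType} {X : completeNormedModType R} {Q : Type}
    {S : set (R -> Q)} {phi : R -> X -> (R -> Q) -> X} :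
  forward_complete_dynsys S phi -> USGES S phi ->
  forall p, 0 < p -> exists k, nondecr_nonneg k /\ Lp_bound S phi p k.
Proof.
move=> hS hU p p0.
have [f hf] : {f : nat -> R * R & forall n, 0 < (f n).1 /\ 0 < (f n).2 /\
    forall t x s, 0 <= t -> `|x| <= n.+1%:R -> S s ->
      `|phi t x s| <= (f n).1 * expR (- (f n).2 * t) * `|x|}.
  apply: (choice (P := fun n (ml : R * R) => 0 < ml.1 /\ 0 < ml.2 /\
    forall t x s, 0 <= t -> `|x| <= n.+1%:R -> S s ->
      `|phi t x s| <= ml.1 * expR (- ml.2 * t) * `|x|)).
  move=> n; have [M [lam [M0 [l0 h]]]] := hU n.+1%:R (ltr0Sn _ _).
  by exists (M, lam).
pose B n := (f n).1 `^ p / ((f n).2 * p).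
have B0 : forall n, 0 <= B n.
  move=> n; apply: divr_ge0; first exact: powR_ge0.
  have [_ [l0 _]] := hf n; apply: mulr_ge0; exact: ltW.
pose D n := \sum_(i < n.+1) B i.
have D0 : forall n, 0 <= D n by move=> n; apply: sumr_ge0 => i _.
have BD : forall n, B n <= D n.
  by move=> n; rewrite /D big_ord_recr /= lerDr; apply: sumr_ge0 => i _.
have Dmon : forall n m, (m <= n)%N -> D m <= D n.
  elim=> [|n IH] m.
    by rewrite leqn0 => /eqP ->.
  rewrite leq_eqVlt => /orP[/eqP -> //|]; rewrite ltnS => /IH h.
  apply: le_trans h _; rewrite [leRHS]/D big_ord_recr /= lerDl //.
pose k (a : R) := (D (truncn a)) `^ (p^-1).
have kp : forall a : R, (k a) `^ p = D (truncn a).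
  by move=> a; rewrite /k -powRrM mulVf ?gt_eqF // powRr1.
exists k; split.
  split; first by move=> r _; exact: powR_ge0.
  move=> a b a0 ab; apply: ge0_ler_powR; rewrite ?nnegrE //.
    by rewrite invr_ge0 ltW.
  by apply: Dmon; exact: le_truncn.
move=> x s Ss.
set n := truncn `|x|.
have [M0 [l0 hb]] := hf n.
set M := (f n).1 in M0 hb *; set l := (f n).2 in l0 hb *.
have xn : `|x| <= n.+1%:R by apply: ltW; exact: truncnS_gt.
pose rate := l * p.
have rate0 : 0 < rate by apply: mulr_gt0.
pose c := M `^ p * `|x| `^ p / rate.
have c0 : 0 <= c.
  by apply: divr_ge0; [apply: mulr_ge0; exact: powR_ge0|exact: ltW].
have mf := @meas_f R X Q S phi p x s hS Ss.
have mI : measurable (`[0%R, +oo[ : set R) by [].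
have h1 : (\int[lebesgue_measure]_(t in `[0%R, +oo[) ((`|phi t x s| `^ p)%:E)
   <= \int[lebesgue_measure]_(t in `[0%R, +oo[) (c%:E * (exponential_pdf rate t)%:E))%E.
  apply: ge0_le_integral => //.
  - apply: emeasurable_funM; first exact: measurable_cst.
    apply/measurable_EFinP; apply: measurable_funTS.
    exact: measurable_exponential_pdf.
  move=> t; rewrite /= in_itv /= andbT => t0.
  rewrite -EFinM lee_fin exponential_pdfE //.
  apply: (@le_trans _ _ ((M * expR (- l * t) * `|x|) `^ p)).
    have Me0 : 0 <= M * expR (- l * t) by apply: mulr_ge0; [exact: ltW|exact: expR_ge0].
    apply: ge0_ler_powR; [exact: ltW|by rewrite nnegrE|by rewrite nnegrE mulr_ge0|].
    exact: hb.
  have Me0 : 0 <= M * expR (- l * t) by apply: mulr_ge0; [exact: ltW|exact: expR_ge0].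
  rewrite (powRM _ Me0 (normr_ge0 x)) (powRM _ (ltW M0) (expR_ge0 _)).
  rewrite -expRM /c.
  have -> : expR (- l * t * p) = expR (- rate * t) by congr expR; rewrite /rate; ring.
  rewrite le_eqVlt; apply/orP; left; apply/eqP; field; by rewrite gt_eqF.
apply: (le_trans h1).
have g0 : forall t, 0 <= exponential_pdf rate t.
  by move=> t; apply: exponential_pdf_ge0; exact: ltW.
have mg : measurable_fun setT (fun t : R => ((exponential_pdf rate t)%:E : \bar R)).
  by apply/measurable_EFinP; exact: measurable_exponential_pdf.
rewrite ge0_integralZl_EFin //; last first.
- exact: measurable_funTS.
- by move=> t _; rewrite lee_fin.
have h3 : (\int[lebesgue_measure]_(t in `[0%R, +oo[) ((exponential_pdf rate t)%:E) <= 1)%E.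
  rewrite -(integral_exponential_pdf rate0).
  apply: ge0_subset_integral => //.
  by move=> t _; rewrite lee_fin.
apply: (le_trans (lee_wpmul2l _ h3)); first by rewrite lee_fin.
rewrite mule1 lee_fin kp.
have -> : c = B n * `|x| `^ p by rewrite /c /B mulrAC.
by apply: ler_wpM2r; [exact: powR_ge0|exact: BD].
Qed.


Theorem theorem2 (R : realType) (X : completeNormedModType R) (Q : Type)
    (S : set (R -> Q)) (phi : R -> X -> (R -> Q) -> X)
    (t1 G0 : R) (beta : R -> R) :
  forward_complete_dynsys S phi ->
  0 < t1 -> 0 < G0 ->
  class_Kinf beta ->
  (limf_esup (fun r : R => (beta r / r)%:E) (0%R^'+) < +oo)%E ->
  (forall t x s, 0 <= t <= t1 -> S s -> `|phi t x s| <= G0 * beta `|x|) ->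
  [/\ (USGES S phi <->
        forall p : R, 0 < p -> exists k : R -> R,
          nondecr_nonneg k /\ Lp_bound S phi p k),
      (USGES S phi <->
        exists p : R, 0 < p /\ exists k : R -> R,
          nondecr_nonneg k /\ Lp_bound S phi p k)
    & ((forall p : R, 0 < p -> exists k : R -> R,
          nondecr_nonneg k /\ Lp_bound S phi p k) <->
       (exists p : R, 0 < p /\ exists k : R -> R,
          nondecr_nonneg k /\ Lp_bound S phi p k))].
Proof.
move=> hS t10 G00 hK hl hB.
have AB := @from_usges R X Q S phi hS.
have BA : (exists p : R, 0 < p /\ exists k : R -> R,
          nondecr_nonneg k /\ Lp_bound S phi p k) -> USGES S phi.
  move=> [p [p0 [k [hk hL]]]].
  exact: (to_usges t1 G0 beta p k hS t10 G00 hK hl hB p0 hk hL).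
have C : (forall p : R, 0 < p -> exists k : R -> R,
          nondecr_nonneg k /\ Lp_bound S phi p k) ->
       (exists p : R, 0 < p /\ exists k : R -> R,
          nondecr_nonneg k /\ Lp_bound S phi p k).
  by move=> h; exists 1; split; [exact: ltr01|exact: h ltr01].
split; split.
- exact: AB.
- by move=> h; apply: BA; apply: C.
- by move=> h; apply: C; apply: AB.
- exact: BA.
- exact: C.
- by move=> h; apply: AB; apply: BA.
Qed.
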